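(* Let $G$ be a profinite group and suppose an element $g\in G$ has a countable Engel sink. Then there are positive integers $i,k$ and a coset $Nb$ of an open normal subgroup $N$ of $G$ such that $[[nb,{}_i g],g^k]=1$ for all $n\in N$.
   Context: Commutators are left-normed, $[a,b]=a^{-1}b^{-1}ab$, and $[x,{}_n g]=[x,g,\dots,g]$ with $g$ repeated $n$ times. An Engel sink of an element $g$ of a group $G$ is a set $\mathscr E(g)\subseteq G$ such that for every $x\in G$ there is a positive integer $n(x,g)$ with $[x,{}_n g]\in\mathscr E(g)$ for all $n\ge n(x,g)$. ''Countable'' means finite or denumerable. *)

(* Defs.v *)
From mathcomp Require Import all_boot all_order all_algebra.
From mathcomp Require Import all_classical all_reals all_analysis.
Set Implicit Arguments. Unset Strict Implicit. Unset Printing Implicit Defensive.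
Local Open Scope classical_set_scope.

Definition group_axioms {G : Type} (mul : G -> G -> G) (inv : G -> G) (one : G) :
  Prop :=
  [/\ forall x y z, mul x (mul y z) = mul (mul x y) z,
      forall x, mul one x = x,
      forall x, mul x one = x,
      forall x, mul (inv x) x = one &
      forall x, mul x (inv x) = one].

Definition is_profinite_group {G : topologicalType}
  (mul : G -> G -> G) (inv : G -> G) (one : G) : Prop :=
  group_axioms mul inv one /\
  continuous (fun p : G * G => mul p.1 p.2) /\
  continuous inv /\
  compact [set: G] /\
  hausdorff_space G /\
  totally_disconnected [set: G].

Definition grp_comm {G : Type} (mul : G -> G -> G) (inv : G -> G) (a b : G) : G :=
  mul (mul (mul (inv a) (inv b)) a) b.

Definition engel_comm {G : Type} (mul : G -> G -> G) (inv : G -> G)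
  (x : G) (n : nat) (g : G) : G :=
  iter n (fun z => grp_comm mul inv z g) x.

Definition gpow {G : Type} (mul : G -> G -> G) (one : G) (g : G) (k : nat) : G :=
  iter k (mul g) one.

Definition engel_sink {G : Type} (mul : G -> G -> G) (inv : G -> G)
  (g : G) (E : set G) : Prop :=
  forall x : G, exists n0 : nat, (0 < n0)%N /\
    forall n : nat, (n0 <= n)%N -> E (engel_comm mul inv x n g).

Definition normal_subgroup {G : Type} (mul : G -> G -> G) (inv : G -> G)
  (one : G) (N : set G) : Prop :=
  [/\ N one,
      forall x y, N x -> N y -> N (mul x y),
      forall x, N x -> N (inv x) &
      forall x n, N n -> N (mul (mul (inv x) n) x)].

(* Main.v *)
Require Import Defs.
From mathcomp Require Import all_boot all_order all_algebra.
From mathcomp Require Import all_classical all_reals all_analysis.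
From Stdlib Require Import ClassicalEpsilon.
Local Open Scope classical_set_scope.


Definition cj {G : Type} (mul : G -> G -> G) (inv : G -> G) (y x : G) :=
  mul (mul (inv y) x) y.

Section Grp.
Context {G : Type} {mul : G -> G -> G} {inv : G -> G} {one : G}.
Context (hg : group_axioms mul inv one).
Local Notation cj := (cj mul inv).

Lemma gA x y z : mul x (mul y z) = mul (mul x y) z.
Proof. by case: hg. Qed.
Lemma g1m x : mul one x = x.
Proof. by case: hg. Qed.
Lemma gm1 x : mul x one = x.
Proof. by case: hg. Qed.
Lemma gVm x : mul (inv x) x = one.
Proof. by case: hg. Qed.
Lemma gmV x : mul x (inv x) = one.
Proof. by case: hg. Qed.

Lemma gKl a x : mul (inv a) (mul a x) = x.
Proof. by rewrite gA gVm g1m. Qed.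
Lemma gKl' a x : mul a (mul (inv a) x) = x.
Proof. by rewrite gA gmV g1m. Qed.
Lemma gKr a x : mul (mul x a) (inv a) = x.
Proof. by rewrite -gA gmV gm1. Qed.
Lemma gKr' a x : mul (mul x (inv a)) a = x.
Proof. by rewrite -gA gVm gm1. Qed.

Lemma ginv_uniq a b : mul a b = one -> inv a = b.
Proof. by move=> h; rewrite -(gm1 (inv a)) -h gKl. Qed.
Lemma ginvK a : inv (inv a) = a.
Proof. by apply: ginv_uniq; rewrite gVm. Qed.
Lemma ginv1 : inv one = one.
Proof. by apply: ginv_uniq; rewrite g1m. Qed.
Lemma ginvM a b : inv (mul a b) = mul (inv b) (inv a).
Proof. by apply: ginv_uniq; rewrite -gA gKl' gmV. Qed.


Lemma cjM y a b : cj y (mul a b) = mul (cj y a) (cj y b).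
Proof. by rewrite /cj -!gA gKl'. Qed.
Lemma cjV y a : cj y (inv a) = inv (cj y a).
Proof. by rewrite /cj !ginvM ginvK gA. Qed.
Lemma cj1 y : cj y one = one.
Proof. by rewrite /cj gm1 gVm. Qed.
Lemma cj1g x : cj one x = x.
Proof. by rewrite /cj ginv1 g1m gm1. Qed.
Lemma cjJ x y n : cj y (cj x n) = cj (mul x y) n.
Proof. by rewrite /cj ginvM !gA. Qed.
Lemma cj_comm y a b :
  cj y (grp_comm mul inv a b) = grp_comm mul inv (cj y a) (cj y b).
Proof. by rewrite /grp_comm !cjM !cjV. Qed.
Lemma cj_engel y x m g : cj y g = g ->
  cj y (engel_comm mul inv x m g) = engel_comm mul inv (cj y x) m g.
Proof.
move=> hy; elim: m => [//|m IH] /=.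
by rewrite cj_comm IH hy.
Qed.
Lemma gpow_comm g k : mul (gpow mul one g k) g = mul g (gpow mul one g k).
Proof.
elim: k => [|k IH] /=; first by rewrite g1m gm1.
by rewrite -gA IH.
Qed.
Lemma cj_gpow g k : cj (gpow mul one g k) g = g.
Proof. by rewrite /cj -gA -gpow_comm gKl. Qed.
Lemma comm_one e h : cj h e = e -> grp_comm mul inv e h = one.
Proof. by rewrite /cj /grp_comm -gA => he; rewrite -!gA he gVm. Qed.
Lemma gpowD g a b :
  gpow mul one g (a + b) = mul (gpow mul one g a) (gpow mul one g b).
Proof.
elim: a => [|a IH] /=; first by rewrite add0n g1m.
by rewrite /= IH gA.
Qed.
Lemma gpow_diff g a d :
  mul (inv (gpow mul one g a)) (gpow mul one g (a + d)) = gpow mul one g d.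
Proof. by rewrite gpowD gKl. Qed.

End Grp.

Section Top.
Context {G : topologicalType} {mul : G -> G -> G} {inv : G -> G} {one : G}.
Context (hmul : continuous (fun p : G * G => mul p.1 p.2)).
Context (hinv : continuous inv).
Context (hcpt : compact [set: G]).
Context (hH : hausdorff_space G).

Lemma cont_mul (X : topologicalType) (f h : X -> G) :
  continuous f -> continuous h -> continuous (fun x => mul (f x) (h x)).
Proof.
move=> cf ch x; apply: continuous2_cvg; [exact: (hmul (f x, h x))|exact: cf|exact: ch].
Qed.

Lemma cont_inv (X : topologicalType) (f : X -> G) :
  continuous f -> continuous (fun x => inv (f x)).
Proof. by move=> cf x; apply: continuous_comp; [exact: cf|exact: hinv]. Qed.

Lemma cont_engel m g : continuous (fun x => engel_comm mul inv x m g).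
Proof.
elim: m => [|m IH] /=; first by move=> x.
rewrite /grp_comm.
apply: cont_mul; last exact: cst_continuous.
apply: cont_mul; first apply: cont_mul.
- exact: cont_inv.
- exact/cont_inv/cst_continuous.
- exact: IH.
Qed.

Lemma baire (F : nat -> set G) : (forall j, closed (F j)) ->
  (forall x, exists j, F j x) ->
  exists j U, [/\ open U, U !=set0 & U `<=` F j].
Proof.
move=> clF cov; apply: contrapT => H.
have step j U : open U -> U !=set0 ->
    exists V, [/\ open V, V !=set0 & closure V `<=` U `\` F j].
  move=> oU U0.
  have [y [Uy nFy]] : exists y, U y /\ ~ F j y.
    apply: contrapT => hn; apply: H; exists j, U; split => // z Uz.
    by apply: contrapT => nz; apply: hn; exists z.
  have reg : {for y, regular_space G}.
    by apply: (@compact_regular G y setT hH hcpt); exact: filterT.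
  have nb : nbhs y (U `\` F j).
    apply: open_nbhs_nbhs; split => //.
    by apply: openI => //; exact: closed_openC.
  have [A nA cA] := reg _ nb.
  exists (interior A); split.
  - exact: open_interior.
  - by exists y; apply: nbhs_singleton; apply: nbhs_interior.
  - by apply: subset_trans cA; apply: closureS; exact: interior_subset.
pose P j U V := [/\ open V, V !=set0 & closure V `<=` U `\` F j].
pose st j U := epsilon (inhabits setT) (P j U).
pose s := fix s (j : nat) : set G := if j is j'.+1 then st j' (s j') else setT.
have sI : forall j, open (s j) /\ s j !=set0.
  elim=> [|j [oj nj]]; first by split; [exact: openT | exists one].
  by have [] := epsilon_spec (inhabits setT) (P j (s j)) (step j (s j) oj nj).
have cls : forall j, closure (s j.+1) `<=` s j `\` F j.
  move=> j; have [oj nj] := sI j.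
  by have [] := epsilon_spec (inhabits setT) (P j (s j)) (step j (s j) oj nj).
have dec : forall i k, (i <= k)%N -> s k `<=` s i.
  move=> i; elim=> [|k IH]; first by rewrite leqn0 => /eqP ->.
  rewrite leq_eqVlt => /orP[/eqP -> //|ik].
  move=> z sz; have [skz _] := cls k z (subset_closure sz); exact: IH.
have FF : Filter (filter_from [set: nat] s).
  apply: filter_fromT_filter; first by exists 0%N.
  move=> i j; exists (maxn i j) => z sz; split.
  - by apply: (dec i (maxn i j)) => //; exact: leq_maxl.
  - by apply: (dec j (maxn i j)) => //; exact: leq_maxr.
have PF : ProperFilter (filter_from [set: nat] s).
  by apply: filter_from_proper => j _; have [] := sI j.
have [p [_ cp]] := @hcpt _ PF (filterT : filter_from [set: nat] s setT).
rewrite clusterE in cp.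
have [j Fjp] := cov p.
have : closure (s j.+1) p by apply: cp; exists j.+1.
by move=> /cls [].
Qed.

Lemma sink_open g (E : set G) : countable E -> engel_sink mul inv g E ->
  exists m e U, [/\ open U, U !=set0 &
    forall x, U x -> engel_comm mul inv x m.+1 g = e].
Proof.
move=> /countable_injP [f finj] sink.
pose ee q := epsilon (inhabits one) (fun e => E e /\ f e = q).
pose F' (mq : nat * nat) := [set x | engel_comm mul inv x mq.1.+1 g = ee mq.2].
pose F j := if unpickle j is Some mq then F' mq else set0.
have clF : forall j, closed (F j).
  move=> j; rewrite /F; case: (unpickle j) => [mq|]; last exact: closed0.
  apply: (preimage_closed (f := fun x => engel_comm mul inv x mq.1.+1 g)
     (D := [set ee mq.2])).
    by move=> x _; exact: cont_engel.
  exact/accessible_closed_set1/hausdorff_accessible.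
have cov : forall x, exists j, F j x.
  move=> x; have [n0 [n0pos hn]] := sink x.
  have Ec := hn n0 (leqnn n0).
  have hee := epsilon_spec (inhabits one) (fun e => E e /\ f e = f (engel_comm mul inv x n0 g))
     (ex_intro _ _ (conj Ec erefl)).
  have eq : ee (f (engel_comm mul inv x n0 g)) = engel_comm mul inv x n0 g.
    by case: hee => h1 h2; apply: finj => //; exact: mem_set.
  exists (pickle (n0.-1, f (engel_comm mul inv x n0 g))).
  rewrite /F pickleK; change (engel_comm mul inv x (n0.-1).+1 g = ee (f (engel_comm mul inv x n0 g))); by rewrite prednK // eq.
have [j [U [oU U0 UF]]] := @baire F clF cov.
move: UF; rewrite /F; case: (unpickle j) => [[m q]|] UF.
  by exists m, (ee q), U; split => // x /UF.
by case: U0 => x /UF.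
Qed.

End Top.

Section ZD.
Variable T : topologicalType.
Hypothesis hcpt : compact [set: T].
Hypothesis hH : hausdorff_space T.
Hypothesis htd : totally_disconnected [set: T].

Definition Qs (x : T) := \bigcap_(C in [set C : set T | clopen C /\ C x]) C.

Lemma Qs_closed x : closed (Qs x).
Proof. by apply: closed_bigI => C [[]]. Qed.

Lemma Qs_refl x : Qs x x.
Proof. by move=> C []. Qed.

Lemma Fc x V : open V -> Qs x `<=` V -> exists C, [/\ clopen C, C x & C `<=` V].
Proof.
move=> oV QV; apply: contrapT => H.
pose I := [set C : set T | clopen C /\ C x].
have FF : Filter (filter_from I (fun C => C `&` ~` V)).
  apply: filter_from_filter; first by exists setT; split => //; exact: clopenT.
  move=> i j [ci ix] [cj jx]; exists (i `&` j); first by split; [exact: clopenI|].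
  by move=> z [[iz jz] nVz].
have PF : ProperFilter (filter_from I (fun C => C `&` ~` V)).
  apply: filter_from_proper => C [cC Cx].
  apply: contrapT => hn; apply: H; exists C; split => // z Cz.
  by apply: contrapT => nVz; apply: hn; exists z.
have [p [_ cp]] := @hcpt _ PF (filterT : filter_from I (fun C => C `&` ~` V) setT).
rewrite clusterE in cp.
have inC : forall C, I C -> (C `&` ~` V) p.
  move=> C [cC Cx].
  have cl : closed (C `&` ~` V).
    by apply: closedI; [case: cC|exact: open_closedC].
  move/closure_id: cl => ->; apply: cp; exists C => //; split.
have Qp : Qs x p by move=> C IC; have [] := inC C IC.
have [_] := inC setT (conj clopenT Logic.I); apply; exact: QV.
Qed.

Lemma Qs_L x (D O K : set T) : open O -> closed K -> D = Qs x `&` O ->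
  D = Qs x `&` K -> D x -> D = Qs x.
Proof.
move=> oO cK DO DK Dx.
pose A := Qs x `&` K; pose B' := Qs x `&` ~` O.
have cA : closed A by apply: closedI => //; exact: Qs_closed.
have cB : closed B' by apply: closedI; [exact: Qs_closed|exact: open_closedC].
have disj : forall z, A z -> B' z -> False.
  move=> z Az [_ nOz]; have : D z by rewrite DK.
  by rewrite DO => -[].
have nAB : set_nbhs A (~` B').
  apply/set_nbhsP; exists (~` B'); split => //; first exact: closed_openC.
have [U snU clU] := compact_normal hH hcpt cA nAB.
have [UA [oUA AUA UAU]] := (set_nbhsP A U).1 snU.
pose UB := ~` closure U.
have oUB : open UB by apply: closed_openC; exact: closed_closure.
have BUB : B' `<=` UB by move=> z Bz clz; exact: clU z clz Bz.
have dUAB : forall z, UA z -> UB z -> False.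
  by move=> z /UAU Uz; apply; exact: subset_closure.
have QV : Qs x `<=` UA `|` UB.
  move=> z Qz; have [Kz|nKz] := pselect (K z).
    by left; apply: AUA.
  right; apply: BUB; split => // Oz.
  have : D z by rewrite DO.
  by rewrite DK => -[].
have [C [cC Cx CV]] := @Fc x _ (openU oUA oUB) QV.
have ceq : C `&` UA = C `&` ~` UB.
  apply/seteqP; split => z [Cz h]; split => //.
    by move=> UBz; exact: dUAB z h UBz.
  by case: (CV z Cz) => // /h.
have cC' : clopen (C `&` UA).
  split; first by apply: openI => //; case: cC.
  by rewrite ceq; apply: closedI; [case: cC|exact: open_closedC].
have C'x : (C `&` UA) x.
  by split => //; apply: AUA; move: Dx; rewrite DK.
apply/seteqP; split; first by rewrite DO => z [].
move=> z Qz; have [Oz|nOz] := pselect (O z); first by rewrite DO.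
have [_ UAz] : (C `&` UA) z by apply: Qz.
by exfalso; apply: (dUAB z UAz); apply: BUB.
Qed.

Lemma Qs_conn x : connected (Qs x).
Proof.
move=> B [b Bb] [Op oO BO] [K cK BK].
have [Bx|nBx] := pselect (B x); first exact: (@Qs_L x B Op K oO cK BO BK Bx).
have KO : forall z, Qs x z -> (K z <-> Op z).
  move=> z Qz; split => h.
    have Bz : B z by rewrite BK; split.
    by move: Bz; rewrite BO => -[].
  have Bz : B z by rewrite BO; split.
  by move: Bz; rewrite BK => -[].
have DQ : Qs x `&` ~` K = Qs x.
  apply: (@Qs_L x _ (~` K) (~` Op)) => //.
  - exact: closed_openC.
  - exact: open_closedC.
  - apply/seteqP; split => z [Qz h]; split => // h'; apply: h; exact/(KO z Qz).
  - split; first exact: Qs_refl.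
    by move=> Kx; apply: nBx; rewrite BK; split => //; exact: Qs_refl.
have : B b by [].
rewrite BK => -[Qb Kb].
have : (Qs x `&` ~` K) b by rewrite DQ.
by case.
Qed.

Lemma zd : zero_dimensional T.
Proof.
move=> x y xny; apply: contrapT => H.
have Qy : Qs x y.
  move=> C [cC Cx]; apply: contrapT => nCy; by apply: H; exists C; split.
have : connected_component [set: T] x y.
  exists (Qs x); last exact: Qy.
  by split; [exact: Qs_refl | by [] | exact: Qs_conn].
rewrite htd // => yx.
by move: xny; rewrite yx eqxx.
Qed.

Lemma clopen_nbhd x (W : set T) : open W -> W x ->
  exists C, [/\ clopen C, C x & C `<=` W].
Proof.
move=> oW Wx.
have := @zero_dimensional_cvg T x hH zd hcpt.
move=> /(_ W) [].
  exact: open_nbhs_nbhs.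
by move=> D [Dx cD] DW; exists D.
Qed.
End ZD.

Lemma cont_fst {X Y : topologicalType} : continuous (@fst X Y).
Proof. move=> q; exact: cvg_fst. Qed.
Lemma cont_snd {X Y : topologicalType} : continuous (@snd X Y).
Proof. move=> q; exact: cvg_snd. Qed.

Lemma cont_o {X Y Z : topologicalType} {f : X -> Y} {g : Y -> Z} :
  continuous f -> continuous g -> continuous (fun x => g (f x)).
Proof. by move=> cf cg x; apply: (continuous_comp (cf x) (cg (f x))). Qed.

Section Grp2.
Variables (G : topologicalType) (mul : G -> G -> G) (inv : G -> G) (one : G).
Hypothesis hg : group_axioms mul inv one.
Hypothesis hmul : continuous (fun p : G * G => mul p.1 p.2).
Hypothesis hinv : continuous inv.
Hypothesis hcpt : compact [set: G].
Hypothesis hH : hausdorff_space G.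
Hypothesis htd : totally_disconnected [set: G].

Local Notation cjx := (cj mul inv).
Let cmul := cont_mul hmul.
Let cinv := cont_inv hinv.

Lemma cont_cj (X : topologicalType) (f h : X -> G) :
  continuous f -> continuous h -> continuous (fun x => cjx (f x) (h x)).
Proof.
move=> cf ch; rewrite /cj.
apply: cmul => //; apply: cmul => //; exact: cinv.
Qed.

Lemma open_normal_sub (W : set G) : open W -> W one ->
  exists N, [/\ open N, normal_subgroup mul inv one N & N `<=` W].
Proof.
move=> oW Wone.
have [C [[oC cC] Cone CW]] := @clopen_nbhd G hcpt hH htd one W oW Wone.
pose N := [set x | forall y c, C c <-> C (mul c (cjx y x))].
have N1 : N one by move=> y c; rewrite (cj1 hg) // (gm1 hg).
have NM : forall a b, N a -> N b -> N (mul a b).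
  move=> a b Na Nb y c; rewrite (cjM hg) // (gA hg).
  by rewrite -(Nb y (mul c (cjx y a))) -(Na y c).
have NV : forall a, N a -> N (inv a).
  move=> a Na y c; rewrite (cjV hg) //.
  by rewrite (Na y (mul c (inv (cj mul inv y a)))) -(gA hg) (gVm hg) // (gm1 hg).
have NJ : forall x n, N n -> N (mul (mul (inv x) n) x).
  move=> x n Nn y c; rewrite -/(cj mul inv x n) (cjJ hg) //; exact: Nn.
have NC : N `<=` C.
  by move=> x Nx; have := (Nx one one).1 Cone; rewrite (cj1g hg) // (g1m hg).
have cpt2 : compact [set: G * G] by rewrite -setXTT; exact: compact_setX.
have nc := (compact_near_coveringP [set: G * G]).1 cpt2.
pose P x (p : G * G) := C p.2 <-> C (mul p.2 (cjx p.1 x)).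
have loc : forall p, [set: G * G] p ->
    \forall p' \near p & x \near nbhs one, P x p'.
  move=> p _.
  pose phi := fun q : (G * G) * G => mul q.1.2 (cjx q.1.1 q.2).
  have cphi : continuous phi.
    apply: cmul.
      exact: (cont_o cont_fst cont_snd).
    apply: (@cont_cj _ (fun q : (G * G) * G => q.1.1) (fun q => q.2)).
      exact: (cont_o cont_fst cont_fst).
    exact: cont_snd.
  have cpsi : continuous (fun q : (G * G) * G => q.1.2).
    exact: (cont_o cont_fst cont_snd).
  have e0 : phi (p, one) = p.2 by rewrite /phi /= (cj1 hg) // (gm1 hg).
  suff : nbhs (p, one) [set q | P q.2 q.1] by [].
  have [Cp|nCp] := pselect (C p.2).
    have nC : nbhs (phi (p, one)) C by rewrite e0; apply: open_nbhs_nbhs.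
    have nC' : nbhs (p.2) C by apply: open_nbhs_nbhs.
    have h1 : nbhs (p, one) (phi @^-1` _) := cphi (p, one) _ nC.
    have h2 : nbhs (p, one) ((fun q : (G * G) * G => q.1.2) @^-1` _) := cpsi (p, one) _ nC'.
    move: (@filterI _ _ (@nbhs_filter _ (p, one)) _ _ h1 h2); apply: filterS => q [a b]; by split.
  have oCc : open (~` C) by exact: closed_openC.
  have nC : nbhs (phi (p, one)) (~` C) by rewrite e0; apply: open_nbhs_nbhs.
  have nC' : nbhs (p.2) (~` C) by apply: open_nbhs_nbhs.
  have h1 : nbhs (p, one) (phi @^-1` _) := cphi (p, one) _ nC.
  have h2 : nbhs (p, one) ((fun q : (G * G) * G => q.1.2) @^-1` _) := cpsi (p, one) _ nC'.
  move: (@filterI _ _ (@nbhs_filter _ (p, one)) _ _ h1 h2); apply: filterS => q [a b]; by split.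
have := nc G (nbhs one) P (@nbhs_filter _ one) loc.
move=> nO.
have ON : nbhs one N.
  apply: filterS nO => x /= hx y c; exact: (hx (y, c) Logic.I).
exists N; split => //.
rewrite openE => x Nx.
have ct : continuous (fun z => mul (inv x) z).
  by apply: cmul; [exact: cst_continuous|move=> z].
have : nbhs x [set z | N (mul (inv x) z)].
  have ON' : nbhs (mul (inv x) x) N by rewrite (gVm hg).
  exact: (ct x _ ON').
apply: filterS => z /= Nz.
  by rewrite -(gKl' hg x z); apply: NM.
by move=> x /NC /CW.
Qed.
End Grp2.

Lemma power_in {G : topologicalType} {mul : G -> G -> G} {inv : G -> G} {one : G}
  (hg : group_axioms mul inv one)
  (hmul : continuous (fun p : G * G => mul p.1 p.2))
  (hcpt : compact [set: G]) (g : G) (N : set G) :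
  open N -> normal_subgroup mul inv one N ->
  exists k, (0 < k)%N /\ N (gpow mul one g k).
Proof.
move=> oN [N1 NM NV NJ].
have [p [_ cp]] := @hcpt ((fun j => gpow mul one g j) @ \oo) _ filterT.
pose B := [set y | N (mul (inv p) y)].
have nB : nbhs p B.
  have ct : continuous (fun z => mul (inv p) z).
    by apply: (cont_mul hmul); [exact: cst_continuous|move=> z].
  have ON' : nbhs (mul (inv p) p) N.
    by rewrite (gVm hg); apply: open_nbhs_nbhs.
  exact: (ct p _ ON').
pose A M := [set y | exists2 j, (M <= j)%N & y = gpow mul one g j].
have FA : forall M, ((fun j => gpow mul one g j) @ \oo) (A M).
  move=> M; apply: filterS (nbhs_infty_ge M) => j Mj; by exists j.
have [_ [[j1 _ ->] B1]] := cp _ _ (FA 0%N) nB.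
have [_ [[j2 j12 ->] B2]] := cp _ _ (FA j1.+1) nB.
exists (j2 - j1)%N; split; first by rewrite subn_gt0.
have := NM _ _ (NV _ B1) B2.
rewrite (ginvM hg) (ginvK hg) -(gA hg) (gKl' hg).
by rewrite -{1}(subnKC (ltnW j12)) (gpow_diff hg).
Qed.

Theorem lemma2p7 (G : topologicalType) (mul : G -> G -> G) (inv : G -> G)
  (one : G) (hG : is_profinite_group mul inv one) (g : G)
  (hE : exists E : set G, countable E /\ engel_sink mul inv g E) :
  exists (i k : nat), (0 < i)%N /\ (0 < k)%N /\
    exists (N : set G) (b : G),
      open N /\ normal_subgroup mul inv one N /\
      forall n : G, N n ->
        grp_comm mul inv (engel_comm mul inv (mul n b) i g) (gpow mul one g k) = one.
Proof.
case: hG => hg [hmul [hinv [hcpt [hH htd]]]].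
case: hE => E [cE sink].
have [m [e [U [oU [b Ub] Ue]]]] :=
  @sink_open G mul inv one hmul hinv hcpt hH g E cE sink.
pose W := [set y | U (mul y b)].
have oW : open W.
  have ct : continuous (fun y => mul y b).
    by apply: (cont_mul hmul); [move=> z|exact: cst_continuous].
  exact: ((continuousP _).1 ct U oU).
have Wone : W one by rewrite /W /= (g1m hg).
have [N [oN nN NW]] := @open_normal_sub G mul inv one hg hmul hinv hcpt hH htd W oW Wone.
have [k [k0 Nk]] := power_in hg hmul hcpt g N oN nN.
exists m.+1, k; split => //; split => //; exists N, b; split => //; split => //.
move=> n Nn.
have -> : engel_comm mul inv (mul n b) m.+1 g = e by apply: Ue; exact: NW.
apply: (comm_one hg).
set h := gpow mul one g k.
have eb : e = engel_comm mul inv b m.+1 g by rewrite Ue.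
rewrite {1}eb (cj_engel hg); last exact: (cj_gpow hg).
apply: Ue.
have -> : cj mul inv h b = mul (mul (cj mul inv h b) (inv b)) b by rewrite (gKr' hg).
apply: NW.
case: nN => [N1 NM NV NJ].
have Nbh : N (mul b (mul h (inv b))).
  by rewrite (gA hg); have := NJ (inv b) h Nk; rewrite (ginvK hg).
rewrite /cj -!(gA hg).
by apply: NM; [exact: NV|exact: Nbh].
Qed.
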